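(* Let $M(C,\bar\xi,\pi)$ be a Myller configuration with Darboux frame $(\bar\xi,\bar\mu,\bar v)$ and invariants $G,K,T$ such that $(K(s),T(s))\neq(0,0)$ for all $s$, and let $\bar W_o$ be its unit OD-vector field. Then $C$ is a $W_o$-helix in $M$ if and only if $C$ is a $\bar v$-helix in $M$.
   Context: Let $C$ be a smooth curve in $E^3$ parametrized by arclength $s$; primes denote $d/ds$. A Myller configuration $M(C,\bar\xi,\pi)$ consists of a smooth unit vector field $\bar\xi$ along $C$ and a smooth oriented plane field $\pi$ with $\bar\xi\in\pi$; $\bar v$ is the unit normal of $\pi$, $\bar\mu=\bar v\times\bar\xi$, and $\bar\xi'=G\bar\mu+K\bar v$, $\bar\mu'=-G\bar\xi+T\bar v$, $\bar v'=-K\bar\xi-T\bar\mu$. The osculating-type Darboux vector (OD-vector) is $W_o=T\bar\xi-K\bar\mu$, $\bar W_o=W_o/\|W_o\|$. $C$ is a $W_o$-helix if $\langle\bar W_o,\bar l_o\rangle$ is constant for some constant unit vector $\bar l_o$; $C$ is a $\bar v$-helix if $\langle\bar v,\bar d_v\rangle$ is constant for some constant unit vector $\bar d_v$. *)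

(* Defs.v *)
From Stdlib Require Import Reals.
From Coquelicot Require Import Coquelicot.
Open Scope R_scope.

Definition v3 : Type := (R * R * R)%type.
Definition vx (u : v3) : R := fst (fst u).
Definition vy (u : v3) : R := snd (fst u).
Definition vz (u : v3) : R := snd u.
Definition mk3 (a b c : R) : v3 := (a, b, c).

Definition dot (u w : v3) : R := vx u * vx w + vy u * vy w + vz u * vz w.
Definition cross (u w : v3) : v3 :=
  mk3 (vy u * vz w - vz u * vy w)
      (vz u * vx w - vx u * vz w)
      (vx u * vy w - vy u * vx w).
Definition vadd (u w : v3) : v3 := mk3 (vx u + vx w) (vy u + vy w) (vz u + vz w).
Definition vscal (k : R) (u : v3) : v3 := mk3 (k * vx u) (k * vy u) (k * vz u).
Definition vnorm (u : v3) : R := sqrt (dot u u).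

Definition in_ival (a b : Rbar) (s : R) : Prop := Rbar_lt a s /\ Rbar_lt s b.

Definition vderive (f : R -> v3) (s : R) (df : v3) : Prop :=
  is_derive (fun t => vx (f t)) s (vx df) /\
  is_derive (fun t => vy (f t)) s (vy df) /\
  is_derive (fun t => vz (f t)) s (vz df).

Definition smooth_on (a b : Rbar) (f : R -> R) : Prop :=
  forall (n : nat) (s : R), in_ival a b s -> ex_derive_n f n s.
Definition vsmooth_on (a b : Rbar) (f : R -> v3) : Prop :=
  smooth_on a b (fun t => vx (f t)) /\
  smooth_on a b (fun t => vy (f t)) /\
  smooth_on a b (fun t => vz (f t)).

(** Myller configuration M(C, xi, pi) along the curve r (parametrized by
    arclength s in (a,b)), with Darboux frame (xi, mu, v), v the unit normal
    of the oriented plane field pi, mu = v x xi, and invariants G, K, T. *)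
Definition Myller_config (a b : Rbar) (r xi mu v : R -> v3) (G K T : R -> R)
  : Prop :=
  vsmooth_on a b r /\ vsmooth_on a b xi /\ vsmooth_on a b v /\
  (forall s, in_ival a b s ->
     (exists dr, vderive r s dr /\ vnorm dr = 1) /\
     vnorm (xi s) = 1 /\ vnorm (v s) = 1 /\ dot (xi s) (v s) = 0 /\
     mu s = cross (v s) (xi s) /\
     vderive xi s (vadd (vscal (G s) (mu s)) (vscal (K s) (v s))) /\
     vderive mu s (vadd (vscal (- G s) (xi s)) (vscal (T s) (v s))) /\
     vderive v s (vadd (vscal (- K s) (xi s)) (vscal (- T s) (mu s)))).

Definition W_o (xi mu : R -> v3) (K T : R -> R) (s : R) : v3 :=
  vadd (vscal (T s) (xi s)) (vscal (- K s) (mu s)).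
Definition W_o_bar (xi mu : R -> v3) (K T : R -> R) (s : R) : v3 :=
  vscal (/ vnorm (W_o xi mu K T s)) (W_o xi mu K T s).

Definition Wo_helix (a b : Rbar) (xi mu : R -> v3) (K T : R -> R) : Prop :=
  exists l : v3, vnorm l = 1 /\
    exists c : R, forall s, in_ival a b s -> dot (W_o_bar xi mu K T s) l = c.

Definition v_helix (a b : Rbar) (v : R -> v3) : Prop :=
  exists d : v3, vnorm d = 1 /\
    exists c : R, forall s, in_ival a b s -> dot (v s) d = c.

(* Main.v *)
Require Import Defs.
From Stdlib Require Import Reals.
From Coquelicot Require Import Coquelicot.
From Stdlib Require Import Lra Psatz Classical.
Open Scope R_scope.

Lemma D_eq (f : R -> R) (x l l' : R) : is_derive f x l -> l = l' -> is_derive f x l'.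
Proof. intros H ->; exact H. Qed.

Lemma D_mult (f g : R -> R) (x df dg : R) : is_derive f x df -> is_derive g x dg ->
  is_derive (fun t => f t * g t) x (df * g x + f x * dg).
Proof. intros Hf Hg. exact (is_derive_mult f g x df dg Hf Hg Rmult_comm). Qed.

Lemma D_plus (f g : R -> R) (x df dg : R) : is_derive f x df -> is_derive g x dg ->
  is_derive (fun t => f t + g t) x (df + dg).
Proof. intros Hf Hg. exact (is_derive_plus f g x df dg Hf Hg). Qed.

Lemma D_minus (f g : R -> R) (x df dg : R) : is_derive f x df -> is_derive g x dg ->
  is_derive (fun t => f t - g t) x (df - dg).
Proof. intros Hf Hg. exact (is_derive_minus f g x df dg Hf Hg). Qed.

Lemma D_const (c x : R) : is_derive (fun _ => c) x 0.
Proof. exact (is_derive_const c x). Qed.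

Lemma ival_loc a b s : in_ival a b s -> locally s (in_ival a b).
Proof.
  intros Hs. apply (@locally_open R_UniformSpace (fun u : R => Rbar_lt a u /\ Rbar_lt u b)); auto.
  apply open_and; [apply open_Rbar_gt | apply open_Rbar_lt].
Qed.

Lemma derive_ext_I a b (f g : R -> R) s l :
  (forall t, in_ival a b t -> f t = g t) -> in_ival a b s ->
  is_derive f s l -> is_derive g s l.
Proof.
  intros E Hs Hd. apply (is_derive_ext_loc f g); auto.
  eapply filter_imp; [|apply ival_loc; exact Hs]. exact E.
Qed.

Lemma deriv_zero_of_const a b (f : R -> R) c s l :
  (forall t, in_ival a b t -> f t = c) -> in_ival a b s ->
  is_derive f s l -> l = 0.
Proof.
  intros E Hs Hd.
  assert (H1 : is_derive (fun _ => c) s l) by (eapply derive_ext_I; eauto).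
  apply is_derive_unique in H1. rewrite Derive_const in H1. auto.
Qed.

Lemma ival_conv a b x y z : in_ival a b x -> in_ival a b y ->
  Rmin x y <= z <= Rmax x y -> in_ival a b z.
Proof.
  intros [Hx1 Hx2] [Hy1 Hy2] [H1 H2]. split.
  - destruct (Rle_dec x y).
    + rewrite Rmin_left in H1 by lra. apply Rbar_lt_le_trans with x; [exact Hx1|simpl; lra].
    + rewrite Rmin_right in H1 by lra. apply Rbar_lt_le_trans with y; [exact Hy1|simpl; lra].
  - destruct (Rle_dec x y).
    + rewrite Rmax_right in H2 by lra. apply Rbar_le_lt_trans with y; [simpl; lra|exact Hy2].
    + rewrite Rmax_left in H2 by lra. apply Rbar_le_lt_trans with x; [simpl; lra|exact Hx2].
Qed.

Lemma cont_of_ex (f : R -> R) x : ex_derive f x -> continuity_pt f x.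
Proof.
  intros H. apply continuity_pt_filterlim. apply (ex_derive_continuous f x H).
Qed.

Lemma const_of_deriv_zero a b (f : R -> R) s1 s2 :
  (forall t, in_ival a b t -> is_derive f t 0) -> in_ival a b s1 -> in_ival a b s2 ->
  f s1 = f s2.
Proof.
  intros Hd H1 H2.
  destruct (MVT_gen f s1 s2 (fun _ => 0)) as [c [_ Hc]].
  - intros x Hx. apply Hd. apply (ival_conv a b s1 s2 x H1 H2). cbv zeta in Hx. lra.
  - intros x Hx. apply cont_of_ex. eexists. apply Hd. apply (ival_conv a b s1 s2 x H1 H2). cbv zeta in Hx. lra.
  - lra.
Qed.

Lemma sign_aux a b (f : R -> R) x y :
  (forall t, in_ival a b t -> ex_derive f t) -> (forall t, in_ival a b t -> f t <> 0) ->
  in_ival a b x -> in_ival a b y -> x < y -> 0 < f x * f y.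
Proof.
  intros Hd Hn Hx Hy Hxy.
  assert (Hsub : forall z, x <= z <= y -> in_ival a b z).
  { intros z Hz. apply (ival_conv a b x y z Hx Hy). rewrite Rmin_left, Rmax_right; lra. }
  pose proof (Hn x Hx). pose proof (Hn y Hy).
  destruct (Rlt_or_le 0 (f x * f y)) as [|Hle]; auto. exfalso.
  destruct (Rlt_or_le (f x) 0) as [Hfx|Hfx].
  - assert (0 < f y) by nra.
    destruct (Ranalysis5.IVT_interv f x y) as [z [Hz Hz0]]; auto.
    intros z Hz. apply cont_of_ex, Hd, Hsub; auto.
    apply (Hn z); auto.
  - assert (0 < f x) by lra. assert (f y < 0) by nra.
    destruct (Ranalysis5.IVT_interv (fun t => - f t) x y) as [z [Hz Hz0]]; auto.
    intros z Hz. apply continuity_pt_opp. apply cont_of_ex, Hd, Hsub; auto.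
    lra. lra.
    apply (Hn z); auto. lra.
Qed.

Lemma sign_const a b (f : R -> R) x y :
  (forall t, in_ival a b t -> ex_derive f t) -> (forall t, in_ival a b t -> f t <> 0) ->
  in_ival a b x -> in_ival a b y -> 0 < f x * f y.
Proof.
  intros Hd Hn Hx Hy.
  destruct (Rtotal_order x y) as [H|[H|H]].
  - eapply sign_aux; eauto.
  - subst. pose proof (Hn y Hy). nra.
  - rewrite Rmult_comm. eapply sign_aux; eauto.
Qed.

Lemma two_valued a b (f : R -> R) k x y :
  (forall t, in_ival a b t -> ex_derive f t) ->
  (forall t, in_ival a b t -> f t = 0 \/ f t = k) -> k <> 0 ->
  in_ival a b x -> in_ival a b y -> f x = f y.
Proof.
  intros Hd Hv Hk Hx Hy.
  assert (H : 0 < (f x - k/2) * (f y - k/2)).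
  { apply (sign_const a b (fun t => f t - k/2)); auto.
    - intros t Ht. destruct (Hd t Ht) as [l Hl]. eexists. apply D_minus; [exact Hl| apply D_const].
    - intros t Ht. destruct (Hv t Ht) as [E|E]; rewrite E; lra. }
  destruct (Hv x Hx) as [E1|E1]; destruct (Hv y Hy) as [E2|E2]; rewrite E1, E2 in *; auto;
  exfalso; assert (0 < k*k) by (apply Rsqr_pos_lt in Hk; unfold Rsqr in Hk; lra); nra.
Qed.

Lemma v3_eta (u : v3) : u = mk3 (vx u) (vy u) (vz u).
Proof. destruct u as [[x y] z]; reflexivity. Qed.

Lemma v3_ext (u w : v3) : vx u = vx w -> vy u = vy w -> vz u = vz w -> u = w.
Proof. destruct u as [[x y] z], w as [[x' y'] z']; unfold vx, vy, vz; simpl; intros -> -> ->; reflexivity. Qed.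

Definition v0 : v3 := mk3 0 0 0.

Lemma vderive_const (d : v3) s : vderive (fun _ => d) s v0.
Proof. split; [|split]; exact (D_const _ s). Qed.

Lemma vderive_dot (f g : R -> v3) s df dg : vderive f s df -> vderive g s dg ->
  is_derive (fun t => dot (f t) (g t)) s (dot df (g s) + dot (f s) dg).
Proof.
  intros [Hf1 [Hf2 Hf3]] [Hg1 [Hg2 Hg3]]. unfold dot.
  eapply D_eq. apply D_plus; [apply D_plus|]; apply D_mult; eauto. cbv beta; ring.
Qed.

Lemma vderive_cross (f g : R -> v3) s df dg : vderive f s df -> vderive g s dg ->
  vderive (fun t => cross (f t) (g t)) s (vadd (cross df (g s)) (cross (f s) dg)).
Proof.
  intros [Hf1 [Hf2 Hf3]] [Hg1 [Hg2 Hg3]]. unfold vderive, cross, vadd, mk3, vx, vy, vz in *; simpl.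
  split; [|split]; (eapply D_eq; [apply D_minus; apply D_mult; eauto|cbv beta; ring]).
Qed.

Lemma vderive_scal (h : R -> R) (f : R -> v3) s dh df : is_derive h s dh -> vderive f s df ->
  vderive (fun t => vscal (h t) (f t)) s (vadd (vscal dh (f s)) (vscal (h s) df)).
Proof.
  intros Hh [Hf1 [Hf2 Hf3]]. unfold vderive, vscal, vadd, mk3, vx, vy, vz in *; simpl.
  split; [|split]; (eapply D_eq; [apply D_mult; eauto|cbv beta; ring]).
Qed.

Lemma vderive_ex_x (f : R -> v3) s df : vderive f s df -> ex_derive (fun t => vx (f t)) s.
Proof. intros [H _]; eexists; eauto. Qed.

Lemma lagrange (v a : v3) : dot (cross v a) (cross v a) = dot v v * dot a a - dot v a * dot v a.
Proof. destruct v as [[x y] z], a as [[p q] r]; unfold dot, cross, mk3, vx, vy, vz; simpl; ring. Qed.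

Lemma dot_cross_l (v a : v3) : dot v (cross v a) = 0.
Proof. destruct v as [[x y] z], a as [[p q] r]; unfold dot, cross, mk3, vx, vy, vz; simpl; ring. Qed.
Lemma dot_cross_r (v a : v3) : dot a (cross v a) = 0.
Proof. destruct v as [[x y] z], a as [[p q] r]; unfold dot, cross, mk3, vx, vy, vz; simpl; ring. Qed.
Lemma cross_self (a : v3) : cross a a = v0.
Proof. destruct a as [[p q] r]; unfold v0, cross, mk3, vx, vy, vz; simpl; f_equal; [f_equal|]; ring. Qed.

Lemma dot_sym (u w : v3) : dot u w = dot w u.
Proof. unfold dot; ring. Qed.
Lemma dot_scal_l k (u w : v3) : dot (vscal k u) w = k * dot u w.
Proof. unfold dot, vscal, mk3, vx, vy, vz; simpl; ring. Qed.
Lemma dot_v0 (u : v3) : dot u v0 = 0.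
Proof. unfold dot, v0, mk3, vx, vy, vz; simpl; ring. Qed.

(* Cauchy-Binet / Gram *)
Lemma gram (x l v a : v3) :
  dot x (cross v a) * dot l (cross v a) =
  dot x l * (dot v v * dot a a - dot v a * dot v a)
  - dot x v * (dot v l * dot a a - dot v a * dot a l)
  + dot x a * (dot v l * dot v a - dot v v * dot a l).
Proof. destruct x as [[x1 x2] x3], l as [[l1 l2] l3], v as [[v1 v2] v3], a as [[a1 a2] a3];
  unfold dot, cross, mk3, vx, vy, vz; simpl; ring. Qed.

(* x × ((v×a)×a) identity, dotted with l *)
Lemma triple_id (x l v a : v3) :
  dot x a * dot (cross v a) l - dot x (cross v a) * dot a l =
  dot v a * dot (cross x a) l + dot a a * dot (cross v x) l.
Proof. destruct x as [[x1 x2] x3], l as [[l1 l2] l3], v as [[v1 v2] v3], a as [[a1 a2] a3];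
  unfold dot, cross, mk3, vx, vy, vz; simpl; ring. Qed.

Lemma triple_vec (x v a : v3) :
  vadd (vscal (dot x a) (cross v a)) (vscal (- dot x (cross v a)) a) =
  vadd (vscal (dot v a) (cross x a)) (vscal (dot a a) (cross v x)).
Proof. destruct x as [[x1 x2] x3], v as [[v1 v2] v3], a as [[a1 a2] a3];
  unfold vadd, vscal, dot, cross, mk3, vx, vy, vz; simpl; f_equal; [f_equal|]; ring. Qed.

Lemma vnorm1 (d : v3) : vnorm d = 1 -> dot d d = 1.
Proof.
  unfold vnorm. intros H. assert (0 <= dot d d) by (unfold dot; nra).
  rewrite <- (sqrt_sqrt (dot d d)) by auto. rewrite H; ring.
Qed.

Definition frame_hyp lo hi (v a1 A A3 : R -> v3) : Prop :=
  forall t, in_ival lo hi t ->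
    dot (v t) (v t) = 1 /\ vderive v t (a1 t) /\ vderive a1 t (A t) /\
    vderive A t (A3 t) /\ 0 < dot (a1 t) (a1 t).

Lemma F1 lo hi v a1 A A3 : frame_hyp lo hi v a1 A A3 ->
  forall t, in_ival lo hi t -> dot (v t) (a1 t) = 0.
Proof.
  intros H t Ht. destruct (H t Ht) as [_ [Hd _]].
  pose proof (vderive_dot v v t _ _ Hd Hd) as D.
  assert (E := deriv_zero_of_const lo hi _ 1 t _ (fun s Hs => proj1 (H s Hs)) Ht D).
  rewrite (dot_sym (a1 t)) in E. lra.
Qed.

Lemma F2 lo hi v a1 A A3 : frame_hyp lo hi v a1 A A3 ->
  forall t, in_ival lo hi t -> dot (v t) (A t) = - dot (a1 t) (a1 t).
Proof.
  intros H t Ht. destruct (H t Ht) as [_ [Hd [Hd2 _]]].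
  pose proof (vderive_dot v a1 t _ _ Hd Hd2) as D.
  assert (E := deriv_zero_of_const lo hi _ 0 t _ (F1 lo hi v a1 A A3 H) Ht D).
  lra.
Qed.

Lemma F3 lo hi v a1 A A3 : frame_hyp lo hi v a1 A A3 ->
  forall t, in_ival lo hi t -> dot (cross (v t) (a1 t)) (cross (v t) (a1 t)) = dot (a1 t) (a1 t).
Proof.
  intros H t Ht. rewrite lagrange, (F1 _ _ _ _ _ _ H t Ht), (proj1 (H t Ht)). ring.
Qed.

Lemma F3n lo hi v a1 A A3 : frame_hyp lo hi v a1 A A3 ->
  forall t, in_ival lo hi t -> vnorm (cross (v t) (a1 t)) = sqrt (dot (a1 t) (a1 t)).
Proof. intros H t Ht. unfold vnorm. rewrite (F3 _ _ _ _ _ _ H t Ht). reflexivity. Qed.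

Definition Bf (v a1 : R -> v3) (t : R) : v3 :=
  vscal (/ vnorm (cross (v t) (a1 t))) (cross (v t) (a1 t)).

Lemma dir1 lo hi v a1 A A3 : frame_hyp lo hi v a1 A A3 ->
  forall d c, dot d d = 1 -> (forall t, in_ival lo hi t -> dot (v t) d = c) ->
  exists c', forall t, in_ival lo hi t -> dot (Bf v a1 t) d = c'.
Proof.
  intros H d c Hd Hc.
  assert (Fa : forall t, in_ival lo hi t -> dot (a1 t) d = 0).
  { intros t Ht. destruct (H t Ht) as [_ [D1 _]].
    pose proof (vderive_dot v (fun _ => d) t _ _ D1 (vderive_const d t)) as D.
    pose proof (deriv_zero_of_const lo hi _ c t _ Hc Ht D) as E.
    rewrite dot_v0 in E. lra. }
  assert (NS : forall t, in_ival lo hi t ->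
    dot d (cross (v t) (a1 t)) * dot d (cross (v t) (a1 t)) = dot (a1 t) (a1 t) * (1 - c*c)).
  { intros t Ht. rewrite gram. rewrite (proj1 (H t Ht)), (F1 _ _ _ _ _ _ H t Ht), Hd.
    rewrite (dot_sym d (v t)), (Hc t Ht), (dot_sym d (a1 t)), (Fa t Ht). ring. }
  assert (Be : forall t, in_ival lo hi t ->
     dot (Bf v a1 t) d = / sqrt (dot (a1 t) (a1 t)) * dot d (cross (v t) (a1 t))).
  { intros t Ht. unfold Bf. rewrite dot_scal_l, (F3n _ _ _ _ _ _ H t Ht), (dot_sym (cross _ _) d). reflexivity. }
  assert (Esq : forall t, in_ival lo hi t ->
     dot (Bf v a1 t) d * dot (Bf v a1 t) d = 1 - c*c).
  { intros t Ht. rewrite (Be t Ht).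
    pose proof (proj2 (proj2 (proj2 (proj2 (H t Ht))))) as Sp.
    pose proof (sqrt_lt_R0 _ Sp) as Sq. pose proof (sqrt_sqrt _ (Rlt_le _ _ Sp)) as Sq2.
    transitivity (/ (sqrt (dot (a1 t) (a1 t)) * sqrt (dot (a1 t) (a1 t))) *
       (dot d (cross (v t) (a1 t)) * dot d (cross (v t) (a1 t)))).
    { field. lra. }
    rewrite Sq2, (NS t Ht). field. lra. }
  destruct (classic (exists s0, in_ival lo hi s0)) as [[s0 Hs0]|Hn].
  2:{ exists 0. intros t Ht. exfalso. apply Hn. eauto. }
  exists (dot (Bf v a1 s0) d). intros t Ht.
  destruct (Req_dec (1 - c*c) 0) as [Z|Z].
  - pose proof (Esq t Ht). pose proof (Esq s0 Hs0).
    assert (dot (Bf v a1 t) d = 0) by (apply Rsqr_0_uniq; unfold Rsqr; lra).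
    assert (dot (Bf v a1 s0) d = 0) by (apply Rsqr_0_uniq; unfold Rsqr; lra). lra.
  - assert (Pos : 0 < dot d (cross (v t) (a1 t)) * dot d (cross (v s0) (a1 s0))).
    { apply (sign_const lo hi (fun t => dot d (cross (v t) (a1 t)))); auto.
      - intros u Hu. destruct (H u Hu) as [_ [D1 [D2 _]]]. eexists.
        eapply (vderive_dot (fun _ => d) (fun t => cross (v t) (a1 t)) u).
        apply vderive_const. apply vderive_cross; eauto.
      - intros u Hu E. pose proof (NS u Hu) as N. rewrite E in N.
        pose proof (proj2 (proj2 (proj2 (proj2 (H u Hu))))) as Sp.
        apply Z. apply (Rmult_eq_reg_l (dot (a1 u) (a1 u))); lra. }
    assert (Pos2 : 0 < dot (Bf v a1 t) d * dot (Bf v a1 s0) d).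
    { rewrite (Be t Ht), (Be s0 Hs0).
      pose proof (sqrt_lt_R0 _ (proj2 (proj2 (proj2 (proj2 (H t Ht)))))) as S1.
      pose proof (sqrt_lt_R0 _ (proj2 (proj2 (proj2 (proj2 (H s0 Hs0)))))) as S2.
      pose proof (Rinv_0_lt_compat _ S1). pose proof (Rinv_0_lt_compat _ S2).
      replace (/ sqrt (dot (a1 t) (a1 t)) * dot d (cross (v t) (a1 t)) *
        (/ sqrt (dot (a1 s0) (a1 s0)) * dot d (cross (v s0) (a1 s0)))) with
        ((/ sqrt (dot (a1 t) (a1 t)) * / sqrt (dot (a1 s0) (a1 s0))) *
         (dot d (cross (v t) (a1 t)) * dot d (cross (v s0) (a1 s0)))) by ring.
      apply Rmult_lt_0_compat; auto. apply Rmult_lt_0_compat; auto. }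
    pose proof (Esq t Ht). pose proof (Esq s0 Hs0).
    set (x := dot (Bf v a1 t) d) in *. set (y := dot (Bf v a1 s0) d) in *.
    assert ((x - y) * (x + y) = 0) by nra.
    destruct (Rmult_integral _ _ H2); [lra|]. nra.
Qed.

Lemma dot_vadd_l (u w z : v3) : dot (vadd u w) z = dot u z + dot w z.
Proof. unfold dot, vadd, mk3, vx, vy, vz; simpl; ring. Qed.
Lemma dot_v0_l (u : v3) : dot v0 u = 0.
Proof. unfold dot, v0, mk3, vx, vy, vz; simpl; ring. Qed.

Lemma vderive_eq (f : R -> v3) s df df' : vderive f s df -> df = df' -> vderive f s df'.
Proof. intros H ->; exact H. Qed.

Lemma Bderiv_alg (v a A : v3) (s : R) : 0 < s -> s * s = dot a a -> dot v a = 0 ->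
  dot A (cross v a) = 0 -> dot (cross v a) (cross v a) = dot a a ->
  vadd (vscal (- ((dot (vadd (cross a a) (cross v A)) (cross v a) +
                   dot (cross v a) (vadd (cross a a) (cross v A))) /
                  (2 * sqrt (dot (cross v a) (cross v a)))) /
               sqrt (dot (cross v a) (cross v a)) ^ 2) (cross v a))
       (vscal (/ sqrt (dot (cross v a) (cross v a))) (vadd (cross a a) (cross v A))) = v0.
Proof.
  intros Hs Hss Hva Hg HPP.
  pose proof (triple_vec A v a) as TV.
  pose proof (triple_id A (cross v a) v a) as TI.
  rewrite Hg, Hva in TV. rewrite Hg, Hva, HPP in TI.
  rewrite HPP, <- Hss, sqrt_square by lra. rewrite cross_self.
  assert (K : dot (cross v A) (cross v a) = dot A a).
  { apply (Rmult_eq_reg_l (s*s)); [|nra]. rewrite <- Hss in TI. lra. }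
  rewrite dot_vadd_l, dot_v0_l, (dot_sym (cross v a) (vadd _ _)), dot_vadd_l, dot_v0_l, K.
  pose proof (f_equal vx TV) as TX. pose proof (f_equal vy TV) as TY. pose proof (f_equal vz TV) as TZ.
  rewrite <- Hss in *. set (k := dot A a) in *. clearbody k.
  destruct v as [[v1 v2] v3'], a as [[a1 a2] a3], A as [[b1 b2] b3].
  unfold cross, dot, vadd, vscal, v0, mk3, vx, vy, vz in *; simpl in *.
  assert (s <> 0) by lra.
  apply v3_ext; unfold vx, vy, vz; simpl.
  all: field_simplify; [unfold Rdiv; apply Rmult_eq_0_compat_r; simpl; nra | auto].
Qed.

Lemma dir2 lo hi v a1 A A3 : frame_hyp lo hi v a1 A A3 ->
  forall l c, dot l l = 1 -> (forall t, in_ival lo hi t -> dot (Bf v a1 t) l = c) ->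
  exists d, dot d d = 1 /\ exists c', forall t, in_ival lo hi t -> dot (v t) d = c'.
Proof.
  intros H l c Hl Hc.
  assert (Sp : forall t, in_ival lo hi t -> 0 < dot (a1 t) (a1 t))
    by (intros t Ht; apply (H t Ht)).
  assert (Sq : forall t, in_ival lo hi t -> 0 < sqrt (dot (a1 t) (a1 t)))
    by (intros t Ht; apply sqrt_lt_R0, Sp, Ht).
  assert (Sq2 : forall t, in_ival lo hi t ->
    sqrt (dot (a1 t) (a1 t)) * sqrt (dot (a1 t) (a1 t)) = dot (a1 t) (a1 t))
    by (intros t Ht; apply sqrt_sqrt, Rlt_le, Sp, Ht).
  assert (HP : forall t, in_ival lo hi t ->
    dot (cross (v t) (a1 t)) l = c * sqrt (dot (a1 t) (a1 t))).
  { intros t Ht. rewrite <- (Hc t Ht). unfold Bf. rewrite dot_scal_l, (F3n _ _ _ _ _ _ H t Ht).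
    field. apply Rgt_not_eq, Sq, Ht. }
  assert (HX : forall t, in_ival lo hi t ->
    dot (cross (v t) (A t)) l * sqrt (dot (a1 t) (a1 t)) = c * dot (A t) (a1 t)).
  { intros t Ht. destruct (H t Ht) as [_ [D1 [D2 _]]].
    assert (D := D_minus _ _ t _ _
       (vderive_dot (fun t => cross (v t) (a1 t)) (fun _ => l) t _ _
           (vderive_cross v a1 t _ _ D1 D2) (vderive_const l t))
       (is_derive_scal _ t c _ (is_derive_sqrt _ t _ (vderive_dot a1 a1 t _ _ D2 D2) (Sp t Ht)))).
    assert (E := deriv_zero_of_const lo hi _ 0 t _
       (fun s Hs => Rminus_diag_eq _ _ (HP s Hs)) Ht D).
    rewrite dot_vadd_l, cross_self, dot_v0_l, dot_v0 in E.
    rewrite (dot_sym (a1 t) (A t)) in E.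
    pose proof (Sq t Ht).
    assert (E' : dot (cross (v t) (A t)) l = c *
      ((dot (A t) (a1 t) + dot (A t) (a1 t)) / (2 * sqrt (dot (a1 t) (a1 t))))) by lra.
    rewrite E'. field. lra. }
  assert (Hgf : forall t, in_ival lo hi t ->
    dot (A t) (cross (v t) (a1 t)) * dot (a1 t) l = 0).
  { intros t Ht. pose proof (triple_id (A t) l (v t) (a1 t)) as T.
    rewrite (F1 _ _ _ _ _ _ H t Ht), (HP t Ht) in T.
    pose proof (HX t Ht). pose proof (Sq t Ht). pose proof (Sq2 t Ht).
    assert (E : dot (A t) (cross (v t) (a1 t)) * dot (a1 t) l =
      dot (A t) (a1 t) * (c * sqrt (dot (a1 t) (a1 t)))
      - dot (a1 t) (a1 t) * dot (cross (v t) (A t)) l) by lra.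
    rewrite E. set (s := sqrt (dot (a1 t) (a1 t))) in *. rewrite <- H2.
    replace (s * s * dot (cross (v t) (A t)) l)
      with (s * (dot (cross (v t) (A t)) l * s)) by ring.
    rewrite H0. ring. }
  assert (Key2 : forall t, in_ival lo hi t -> dot (A t) (cross (v t) (a1 t)) <> 0 ->
    c * c * (dot (A t) (cross (v t) (a1 t)) * dot (A t) (cross (v t) (a1 t))) =
    (1 - c * c) * (dot (a1 t) (a1 t) * dot (a1 t) (a1 t) * dot (a1 t) (a1 t))).
  { intros t Ht Hg. destruct (H t Ht) as [Hv [D1 [D2 [D3 _]]]].
    assert (Hf : dot (a1 t) l = 0).
    { destruct (Rmult_integral _ _ (Hgf t Ht)); [contradiction|auto]. }
    assert (D := D_mult _ _ t _ _
       (vderive_dot A (fun t => cross (v t) (a1 t)) t _ _ D3 (vderive_cross v a1 t _ _ D1 D2))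
       (vderive_dot a1 (fun _ => l) t _ _ D2 (vderive_const l t))).
    assert (E := deriv_zero_of_const lo hi _ 0 t _ Hgf Ht D).
    cbv beta in E. rewrite Hf, dot_v0 in E.
    assert (HAl : dot (A t) l = 0).
    { assert (E2 : dot (A t) (cross (v t) (a1 t)) * dot (A t) l = 0) by lra.
      destruct (Rmult_integral _ _ E2); [contradiction|auto]. }
    pose proof (gram (A t) l (v t) (a1 t)) as G1.
    pose proof (gram l l (v t) (a1 t)) as G2.
    rewrite ?Hv, ?(F1 _ _ _ _ _ _ H t Ht), ?HAl, ?(dot_sym l (cross _ _)), ?(HP t Ht),
      ?(dot_sym (A t) (v t)), ?(F2 _ _ _ _ _ _ H t Ht), ?(dot_sym l (a1 t)), ?Hf in G1.
    rewrite ?Hv, ?(F1 _ _ _ _ _ _ H t Ht), ?Hl, ?(dot_sym l (cross _ _)), ?(HP t Ht),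
      ?(dot_sym l (v t)), ?(dot_sym l (a1 t)), ?Hf in G2.
    pose proof (Sq2 t Ht). pose proof (Sp t Ht).
    set (g := dot (v t) l) in *. set (S := dot (a1 t) (a1 t)) in *.
    set (s := sqrt S) in *. set (ga := dot (A t) (cross (v t) (a1 t))) in *.
    assert (G1' : ga * c * s = g * S * S) by lra.
    assert (G2' : c * c * S = S * (1 - g * g)) by nra.
    assert (Hg2 : g * g = 1 - c * c).
    { apply (Rmult_eq_reg_l S); lra. }
    assert (ga * ga * c * c * S = g * g * S * S * S * S).
    { replace (ga * ga * c * c * S) with ((ga * c * s) * (ga * c * s)) by (rewrite <- H0; ring).
      rewrite G1'. ring. }
    apply (Rmult_eq_reg_l S); [|lra]. rewrite Hg2 in H2. nra. }
  destruct (classic (exists s0, in_ival lo hi s0)) as [[s0 Hs0]|Hn].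
  2:{ exists l. split; auto. exists 0. intros t Ht. exfalso. apply Hn. eauto. }
  assert (Dich : (forall t, in_ival lo hi t -> dot (A t) (cross (v t) (a1 t)) = 0) \/
                 (forall t, in_ival lo hi t -> dot (A t) (cross (v t) (a1 t)) <> 0)).
  { destruct (Req_dec (c * c) 0) as [Z1|Z1].
    { left. intros t Ht. destruct (Req_dec (dot (A t) (cross (v t) (a1 t))) 0) as [|Z]; auto.
      exfalso. pose proof (Key2 t Ht Z) as K. rewrite Z1 in K. pose proof (Sp t Ht).
      assert (0 < dot (a1 t) (a1 t) * dot (a1 t) (a1 t) * dot (a1 t) (a1 t)).
      { repeat apply Rmult_lt_0_compat; auto. }
      lra. }
    destruct (Req_dec (1 - c * c) 0) as [Z2|Z2].
    { left. intros t Ht. destruct (Req_dec (dot (A t) (cross (v t) (a1 t))) 0) as [|Z]; auto.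
      exfalso. pose proof (Key2 t Ht Z) as K. rewrite Z2 in K.
      assert (c * c > 0) by (assert (0 <= c*c) by nra; lra).
      assert (dot (A t) (cross (v t) (a1 t)) * dot (A t) (cross (v t) (a1 t)) = 0).
      { apply (Rmult_eq_reg_l (c*c)); lra. }
      apply Z. apply Rsqr_0_uniq. unfold Rsqr. auto. }
    set (psi := fun t => dot (A t) (cross (v t) (a1 t)) * dot (A t) (cross (v t) (a1 t)) *
                / (dot (a1 t) (a1 t) * dot (a1 t) (a1 t) * dot (a1 t) (a1 t))).
    assert (Pk : forall t, in_ival lo hi t -> psi t = 0 \/ psi t = (1 - c*c) / (c*c)).
    { intros t Ht. unfold psi. pose proof (Sp t Ht).
      destruct (Req_dec (dot (A t) (cross (v t) (a1 t))) 0) as [Z|Z].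
      - left. rewrite Z. ring.
      - right. pose proof (Key2 t Ht Z) as K.
        set (ga := dot (A t) (cross (v t) (a1 t))) in *.
        set (S := dot (a1 t) (a1 t)) in *.
        assert (HS : S <> 0) by lra.
        assert (Hc0 : c <> 0) by (intro E; apply Z1; rewrite E; ring).
        replace (ga * ga * / (S * S * S)) with ((c * c * (ga * ga)) / (c * c * (S * S * S)))
          by (field; auto).
        rewrite K. field; auto. }
    assert (Pd : forall t, in_ival lo hi t -> ex_derive psi t).
    { intros t Ht. destruct (H t Ht) as [_ [D1 [D2 [D3 _]]]]. pose proof (Sp t Ht).
      pose proof (vderive_dot A (fun t => cross (v t) (a1 t)) t _ _ D3
         (vderive_cross v a1 t _ _ D1 D2)) as G.
      pose proof (vderive_dot a1 a1 t _ _ D2 D2) as SS.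
      eexists. unfold psi. apply D_mult. apply D_mult; exact G.
      apply is_derive_inv. apply D_mult; [apply D_mult|]; exact SS.
      assert (0 < dot (a1 t) (a1 t) * dot (a1 t) (a1 t) * dot (a1 t) (a1 t)).
      { repeat apply Rmult_lt_0_compat; auto. }
      lra. }
    assert (Kn : (1 - c*c) / (c*c) <> 0).
    { unfold Rdiv. apply Rmult_integral_contrapositive. split; auto. apply Rinv_neq_0_compat; auto. }
    assert (Pc := fun t Ht => two_valued lo hi psi _ t s0 Pd Pk Kn Ht Hs0).
    destruct (Req_dec (dot (A s0) (cross (v s0) (a1 s0))) 0) as [Z|Z].
    - left. intros t Ht. pose proof (Pc t Ht) as P. unfold psi in P. rewrite Z in P.
      rewrite Rmult_0_l, Rmult_0_l in P.
      pose proof (Sp t Ht).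
      assert (0 < dot (a1 t) (a1 t) * dot (a1 t) (a1 t) * dot (a1 t) (a1 t)).
      { repeat apply Rmult_lt_0_compat; auto. }
      assert (Q : dot (A t) (cross (v t) (a1 t)) * dot (A t) (cross (v t) (a1 t)) = 0).
      { apply Rmult_integral in P. destruct P as [P|P]; auto.
        exfalso. apply (Rinv_neq_0_compat _ (Rgt_not_eq _ _ H1)). auto. }
      apply Rsqr_0_uniq. unfold Rsqr. auto.
    - right. intros t Ht E. pose proof (Pc t Ht) as P.
      destruct (Pk s0 Hs0) as [P0|P0].
      + unfold psi in P0. pose proof (Sp s0 Hs0).
        assert (0 < dot (a1 s0) (a1 s0) * dot (a1 s0) (a1 s0) * dot (a1 s0) (a1 s0)).
        { repeat apply Rmult_lt_0_compat; auto. }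
        apply Rmult_integral in P0. destruct P0 as [P0|P0].
        * apply Z. apply Rsqr_0_uniq. unfold Rsqr. auto.
        * apply (Rinv_neq_0_compat _ (Rgt_not_eq _ _ H1)). auto.
      + rewrite P0 in P. unfold psi in P. rewrite E in P. apply Kn. rewrite <- P. ring. }
  destruct Dich as [G0|GN].
  -
    assert (DB : forall t, in_ival lo hi t -> vderive (Bf v a1) t v0).
    { intros t Ht. destruct (H t Ht) as [Hv [D1 [D2 _]]].
      pose proof (vderive_cross v a1 t _ _ D1 D2) as DP.
      pose proof (vderive_dot _ _ t _ _ DP DP) as DQ.
      assert (Qp : 0 < dot (cross (v t) (a1 t)) (cross (v t) (a1 t))).
      { rewrite (F3 _ _ _ _ _ _ H t Ht). auto. }
      pose proof (is_derive_sqrt _ t _ DQ Qp) as DS.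
      pose proof (is_derive_inv _ t _ DS (Rgt_not_eq _ _ (sqrt_lt_R0 _ Qp))) as DI.
      pose proof (vderive_scal _ _ t _ _ DI DP) as DB.
      eapply vderive_eq. exact DB. cbv beta.
      apply Bderiv_alg with (s := sqrt (dot (a1 t) (a1 t))).
      apply Sq, Ht. apply Sq2, Ht. apply (F1 _ _ _ _ _ _ H t Ht). apply G0, Ht.
      apply (F3 _ _ _ _ _ _ H t Ht). }
    exists (Bf v a1 s0). split.
    + unfold Bf. rewrite dot_scal_l, (dot_sym (cross _ _)), dot_scal_l.
      rewrite (F3n _ _ _ _ _ _ H s0 Hs0), (F3 _ _ _ _ _ _ H s0 Hs0).
      pose proof (Sq s0 Hs0). pose proof (Sq2 s0 Hs0). set (q := sqrt (dot (a1 s0) (a1 s0))) in *. rewrite <- H1. field. lra.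
    + exists 0. intros t Ht.
      assert (EB : Bf v a1 s0 = Bf v a1 t).
      { destruct (DB t Ht) as [_ _].
        apply v3_ext.
        - apply (const_of_deriv_zero lo hi (fun t => vx (Bf v a1 t))); auto.
          intros u Hu. exact (proj1 (DB u Hu)).
        - apply (const_of_deriv_zero lo hi (fun t => vy (Bf v a1 t))); auto.
          intros u Hu. exact (proj1 (proj2 (DB u Hu))).
        - apply (const_of_deriv_zero lo hi (fun t => vz (Bf v a1 t))); auto.
          intros u Hu. exact (proj2 (proj2 (DB u Hu))). }
      rewrite EB. unfold Bf. rewrite dot_sym, dot_scal_l, (dot_sym (cross _ _)), dot_cross_l. ring.
  -
    exists l. split; auto. exists (dot (v s0) l). intros t Ht.
    apply (const_of_deriv_zero lo hi (fun t => dot (v t) l)); auto.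
    intros u Hu. destruct (H u Hu) as [_ [D1 _]].
    eapply D_eq. apply (vderive_dot v (fun _ => l) u _ _ D1 (vderive_const l u)).
    rewrite dot_v0. destruct (Rmult_integral _ _ (Hgf u Hu)) as [E|E].
    + exfalso. exact (GN u Hu E).
    + rewrite E. ring.
Qed.

Definition Dn (n : nat) (f : R -> v3) (t : R) : v3 :=
  mk3 (Derive_n (fun u => vx (f u)) n t) (Derive_n (fun u => vy (f u)) n t)
      (Derive_n (fun u => vz (f u)) n t).

Lemma Dn_deriv lo hi f n t : vsmooth_on lo hi f -> in_ival lo hi t ->
  vderive (Dn n f) t (Dn (S n) f t).
Proof.
  intros [Hx [Hy Hz]] Ht. split; [|split].
  - exact (Derive_correct _ _ (Hx (S n) t Ht)).
  - exact (Derive_correct _ _ (Hy (S n) t Ht)).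
  - exact (Derive_correct _ _ (Hz (S n) t Ht)).
Qed.

Lemma vderive_unique (f : R -> v3) s d1 d2 : vderive f s d1 -> vderive f s d2 -> d1 = d2.
Proof.
  intros [A1 [A2 A3]] [B1 [B2 B3]].
  apply is_derive_unique in A1, A2, A3, B1, B2, B3.
  apply v3_ext; congruence.
Qed.

Lemma cross_gen (v xi : v3) p q :
  cross v (vadd (vscal p xi) (vscal q (cross v xi))) =
  vadd (vscal p (cross v xi)) (vscal q (vadd (vscal (dot v xi) v) (vscal (- dot v v) xi))).
Proof. destruct v as [[x y] z], xi as [[p1 q1] r1];
  unfold vadd, vscal, dot, cross, mk3, vx, vy, vz; simpl; f_equal; [f_equal|]; ring. Qed.

Lemma dot_comb (x y : v3) p q :
  dot (vadd (vscal p x) (vscal q y)) (vadd (vscal p x) (vscal q y)) =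
  p * p * dot x x + 2 * p * q * dot x y + q * q * dot y y.
Proof. unfold vadd, vscal, dot, mk3, vx, vy, vz; simpl; ring. Qed.

Lemma vnorm_of_dot (d : v3) : dot d d = 1 -> vnorm d = 1.
Proof. unfold vnorm. intros ->. apply sqrt_1. Qed.

Theorem theorem28 (a b : Rbar) (r xi mu v : R -> v3) (G K T : R -> R) :
  Rbar_lt a b ->
  Myller_config a b r xi mu v G K T ->
  (forall s, in_ival a b s -> (K s, T s) <> (0, 0)) ->
  (Wo_helix a b xi mu K T <-> v_helix a b v).
Proof.
  intros Hab HM HKT. destruct HM as [Hr [Hxi [Hv Hs]]].
  assert (HA : forall t, in_ival a b t ->
     Dn 1 v t = vadd (vscal (- K t) (xi t)) (vscal (- T t) (mu t))).
  { intros t Ht. apply (vderive_unique v t).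
    - exact (Dn_deriv a b v 0 t Hv Ht).
    - apply (Hs t Ht). }
  assert (FH : frame_hyp a b v (Dn 1 v) (Dn 2 v) (Dn 3 v)).
  { intros t Ht. destruct (Hs t Ht) as [_ [Hxn [Hvn [Hxv [Hmu _]]]]].
    split; [apply vnorm1; auto|]. split; [exact (Dn_deriv a b v 0 t Hv Ht)|].
    split; [exact (Dn_deriv a b v 1 t Hv Ht)|].
    split; [exact (Dn_deriv a b v 2 t Hv Ht)|].
    rewrite (HA t Ht), dot_comb, Hmu, lagrange, dot_cross_r, (vnorm1 _ Hxn), (vnorm1 _ Hvn),
      (dot_sym (v t)), Hxv.
    destruct (Req_dec (K t) 0) as [EK|EK].
    - destruct (Req_dec (T t) 0) as [ET|ET].
      + exfalso. apply (HKT t Ht). rewrite EK, ET. reflexivity.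
      + assert (0 < T t * T t) by (apply Rsqr_pos_lt in ET; unfold Rsqr in ET; lra). nra.
    - assert (0 < K t * K t) by (apply Rsqr_pos_lt in EK; unfold Rsqr in EK; lra). nra. }
  assert (HW : forall t, in_ival a b t -> W_o_bar xi mu K T t = Bf v (Dn 1 v) t).
  { intros t Ht. destruct (Hs t Ht) as [_ [Hxn [Hvn [Hxv [Hmu _]]]]].
    assert (E : W_o xi mu K T t = cross (v t) (Dn 1 v t)).
    { rewrite (HA t Ht), Hmu, cross_gen, (vnorm1 _ Hvn), (dot_sym (v t)), Hxv.
      unfold W_o. rewrite Hmu. apply v3_ext; unfold vadd, vscal, mk3, vx, vy, vz; simpl; ring. }
    unfold W_o_bar, Bf. rewrite E. reflexivity. }
  split.
  - intros [l [Hl [c Hc]]].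
    destruct (dir2 a b v (Dn 1 v) (Dn 2 v) (Dn 3 v) FH l c (vnorm1 _ Hl)) as [d [Hd [c' Hc']]].
    { intros t Ht. rewrite <- (HW t Ht). auto. }
    exists d. split; [apply vnorm_of_dot; auto|]. exists c'. auto.
  - intros [d [Hd [c Hc]]].
    destruct (dir1 a b v (Dn 1 v) (Dn 2 v) (Dn 3 v) FH d c (vnorm1 _ Hd) Hc) as [c' Hc'].
    exists d. split; auto. exists c'. intros t Ht. rewrite (HW t Ht). auto.
Qed.
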